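(* As formal power series in $t$ (with coefficients polynomials in $x$), \[ \frac{(1-t)^3}{(1-t)^4-xt(t+1)^2}=1+\sum_{m=1}^{\infty}H_m^{(2)}(x)\,t^m . \]
   Context: For integers $m\ge0$, $n\ge1$, let $\theta_m=2\pi/(2m+1)$ and $H_m^{(n)}(x)=\prod_{k=1}^{m}\big(x+(2\cos k\theta_m+2)^n\big)$ (so $H_0^{(n)}=1$). *)

(* Defs.v *)
From Stdlib Require Import Reals.
Open Scope R_scope.

Definition theta (m : nat) : R := 2 * PI / (2 * INR m + 1).

Fixpoint Hprod (n m : nat) (x : R) (j : nat) : R :=
  match j with
  | O => 1
  | S j' => Hprod n m x j' * (x + (2 * cos (INR (S j') * theta m) + 2) ^ n)
  end.

Definition H (n m : nat) (x : R) : R := Hprod n m x m.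

Definition ps := nat -> R.
Definition ps_const (c : R) : ps := fun k => match k with O => c | _ => 0 end.
Definition ps_one : ps := ps_const 1.
Definition ps_t : ps := fun k => match k with 1%nat => 1 | _ => 0 end.
Definition ps_add (f g : ps) : ps := fun k => f k + g k.
Definition ps_sub (f g : ps) : ps := fun k => f k - g k.
Definition ps_mul (f g : ps) : ps :=
  fun k => sum_f_R0 (fun i => f i * g (k - i)%nat) k.
Fixpoint ps_pow (f : ps) (e : nat) : ps :=
  match e with O => ps_one | S e' => ps_mul f (ps_pow f e') end.

Definition Hseries (x : R) : ps :=
  fun m => match m with O => 1 | _ => H 2 m x end.

(* Main.v *)
Require Import Defs.
From Stdlib Require Import Reals Lra Lia List.
Open Scope R_scope.

Fixpoint pq (x:R) (m:nat) : (R*R)*(R*R) :=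
  match m with
  | O => ((1,0),(-1,1))
  | S m' => let '((a,b),(c,d)) := pq x m' in ((c,d), (-2*c - x*d - a, c - 2*d - b))
  end.
Definition pp x m := fst (fst (pq x m)).
Definition qq x m := snd (fst (pq x m)).
Definition hh x m := pp x m ^ 2 + x * qq x m ^ 2.

Lemma ppSS x m : pp x (S (S m)) = -2 * pp x (S m) - x * qq x (S m) - pp x m.
Proof. unfold pp, qq. cbn [pq]. destruct (pq x m) as [[a b] [c d]]. simpl. reflexivity. Qed.
Lemma qqSS x m : qq x (S (S m)) = pp x (S m) - 2 * qq x (S m) - qq x m.
Proof. unfold pp, qq. cbn [pq]. destruct (pq x m) as [[a b] [c d]]. simpl. reflexivity. Qed.

Definition lp (l : list R) : ps := fun k => nth k l 0.
Fixpoint conv (l : list R) (g : ps) (k : nat) : R :=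
  match l with
  | nil => 0
  | a :: l' => a * g k + match k with O => 0 | S k' => conv l' g k' end
  end.

Lemma sum_front (f : nat -> R) n : sum_f_R0 f (S n) = f O + sum_f_R0 (fun i => f (S i)) n.
Proof. induction n; simpl in *. ring. rewrite IHn. ring. Qed.

Lemma mul_ext f f' g g' k : (forall i, f i = f' i) -> (forall i, g i = g' i) ->
  ps_mul f g k = ps_mul f' g' k.
Proof. intros Hf Hg. unfold ps_mul. apply sum_eq. intros. rewrite Hf, Hg. reflexivity. Qed.

Lemma mul_lp l g k : ps_mul (lp l) g k = conv l g k.
Proof.
  revert k; induction l as [|a l IH]; intros k.
  - unfold ps_mul, lp. simpl. rewrite sum_eq_R0. reflexivity. intros i _. destruct i; simpl; ring.
  - destruct k as [|k].
    + unfold ps_mul, lp. simpl. ring.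
    + unfold ps_mul. rewrite sum_front. simpl conv. rewrite <- IH. unfold ps_mul. simpl. reflexivity.
Qed.

Lemma sum_rev (f : nat -> R) n : sum_f_R0 f n = sum_f_R0 (fun i => f (n - i)%nat) n.
Proof.
  induction n. simpl. reflexivity.
  rewrite (sum_front (fun i => f (S n - i)%nat)). simpl sum_f_R0 at 1. rewrite IHn.
  rewrite Rplus_comm. f_equal.
Qed.

Lemma mul_comm f g k : ps_mul f g k = ps_mul g f k.
Proof.
  unfold ps_mul. rewrite sum_rev. apply sum_eq. intros i Hi.
  rewrite Rmult_comm. f_equal. f_equal. lia.
Qed.

Definition f1 := ps_sub ps_one ps_t.

Lemma f1E i : f1 i = lp (1 :: -1 :: nil) i.
Proof. destruct i as [|[|[|i]]]; unfold f1, ps_sub, ps_one, ps_const, ps_t, lp; simpl; ring. Qed.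

Lemma oneE i : ps_one i = lp (1 :: nil) i.
Proof. destruct i as [|[|i]]; reflexivity. Qed.
Lemma pow1 k : ps_pow f1 1 k = lp (1 :: -1 :: nil) k.
Proof. change (ps_pow f1 1 k) with (ps_mul f1 ps_one k).
  rewrite (mul_ext _ _ _ _ _ f1E oneE), mul_lp.
  destruct k as [|[|k]]; unfold lp; simpl; try ring; destruct k; simpl; ring. Qed.
Lemma pow2 k : ps_pow f1 2 k = lp (1 :: -2 :: 1 :: nil) k.
Proof. change (ps_pow f1 2 k) with (ps_mul f1 (ps_pow f1 1) k).
  rewrite (mul_ext _ _ _ _ _ f1E pow1), mul_lp.
  destruct k as [|[|[|k]]]; unfold lp; simpl; try ring; destruct k; simpl; ring. Qed.
Lemma pow3 k : ps_pow f1 3 k = lp (1 :: -3 :: 3 :: -1 :: nil) k.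
Proof. change (ps_pow f1 3 k) with (ps_mul f1 (ps_pow f1 2) k).
  rewrite (mul_ext _ _ _ _ _ f1E pow2), mul_lp.
  destruct k as [|[|[|[|k]]]]; unfold lp; simpl; try ring; destruct k; simpl; ring. Qed.
Lemma pow4 k : ps_pow f1 4 k = lp (1 :: -4 :: 6 :: -4 :: 1 :: nil) k.
Proof. change (ps_pow f1 4 k) with (ps_mul f1 (ps_pow f1 3) k).
  rewrite (mul_ext _ _ _ _ _ f1E pow3), mul_lp.
  destruct k as [|[|[|[|[|k]]]]]; unfold lp; simpl; try ring; destruct k; simpl; ring. Qed.

Lemma g1E i : ps_add ps_t ps_one i = lp (1 :: 1 :: nil) i.
Proof. destruct i as [|[|[|i]]]; unfold ps_add, ps_one, ps_const, ps_t, lp; simpl; ring. Qed.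
Lemma gpow1 k : ps_pow (ps_add ps_t ps_one) 1 k = lp (1 :: 1 :: nil) k.
Proof. change (ps_pow (ps_add ps_t ps_one) 1 k) with (ps_mul (ps_add ps_t ps_one) ps_one k).
  rewrite (mul_ext _ _ _ _ _ g1E oneE), mul_lp.
  destruct k as [|[|k]]; unfold lp; simpl; try ring; destruct k; simpl; ring. Qed.
Lemma gpow2 k : ps_pow (ps_add ps_t ps_one) 2 k = lp (1 :: 2 :: 1 :: nil) k.
Proof. change (ps_pow (ps_add ps_t ps_one) 2 k) with (ps_mul (ps_add ps_t ps_one) (ps_pow (ps_add ps_t ps_one) 1) k).
  rewrite (mul_ext _ _ _ _ _ g1E gpow1), mul_lp.
  destruct k as [|[|[|k]]]; unfold lp; simpl; try ring; destruct k; simpl; ring. Qed.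
Lemma tE i : ps_t i = lp (0 :: 1 :: nil) i.
Proof. destruct i as [|[|[|i]]]; reflexivity. Qed.
Lemma tg k : ps_mul ps_t (ps_pow (ps_add ps_t ps_one) 2) k = lp (0 :: 1 :: 2 :: 1 :: nil) k.
Proof. rewrite (mul_ext _ _ _ _ _ tE gpow2), mul_lp.
  destruct k as [|[|[|[|[|k]]]]]; unfold lp; simpl; try ring; destruct k; simpl; ring. Qed.
Lemma cE c i : ps_const c i = lp (c :: nil) i.
Proof. destruct i as [|[|i]]; reflexivity. Qed.

Lemma DE x k : ps_sub (ps_pow (ps_sub ps_one ps_t) 4)
            (ps_mul (ps_const x) (ps_mul ps_t (ps_pow (ps_add ps_t ps_one) 2))) k
  = lp (1 :: -(4+x) :: 6 - 2*x :: -(4+x) :: 1 :: nil) k.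
Proof. unfold ps_sub at 1. fold f1. rewrite pow4.
  rewrite (mul_ext _ _ _ _ _ (cE x) tg), mul_lp.
  destruct k as [|[|[|[|[|k]]]]]; unfold lp; simpl; try ring; destruct k; simpl; ring. Qed.

Lemma rec_main x (HS : forall m, Hseries x m = hh x m) n :
  ps_mul (Hseries x)
    (ps_sub (ps_pow (ps_sub ps_one ps_t) 4)
            (ps_mul (ps_const x) (ps_mul ps_t (ps_pow (ps_add ps_t ps_one) 2)))) n
  = ps_pow (ps_sub ps_one ps_t) 3 n.
Proof.
  rewrite (mul_ext _ _ _ _ _ HS (DE x)), mul_comm, mul_lp.
  fold f1. rewrite pow3.
  destruct n as [|[|[|[|n]]]].
  1-4: unfold lp, hh, pp, qq; simpl; ring.
  replace (lp (1 :: -3 :: 3 :: -1 :: nil) (S (S (S (S n))))) with 0 by (destruct n; reflexivity).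
  simpl conv. unfold hh. repeat (rewrite ppSS || rewrite qqSS). destruct n; cbv beta iota; ring.
Qed.

Fixpoint vv (m:nat) (y:R) : R*R := match m with O => (1, y+1) | S m' => let (a,b) := vv m' y in (b, y*b - a) end.
Definition v m y := fst (vv m y).
Lemma vSS m y : v (S (S m)) y = y * v (S m) y - v m y.
Proof. unfold v. cbn [vv]. destruct (vv m y) as [a b]. reflexivity. Qed.
Lemma v0 y : v 0 y = 1. Proof. reflexivity. Qed.
Lemma v1 y : v 1 y = y + 1. Proof. reflexivity. Qed.

Lemma cos_sin_prod a f : 2 * cos f * sin a = sin (a + f) + sin (a - f).
Proof. rewrite sin_plus, sin_minus. ring. Qed.

Lemma v_trig m f : v m (2 * cos f) * sin (f/2) = sin ((2 * INR m + 1) * (f/2)).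
Proof.
  assert (H : forall m, v m (2 * cos f) * sin (f/2) = sin ((2 * INR m + 1) * (f/2)) /\
                        v (S m) (2 * cos f) * sin (f/2) = sin ((2 * INR (S m) + 1) * (f/2))).
  { clear m. intro m. induction m as [|m IH].
    - split. rewrite v0, Rmult_1_l. f_equal. simpl. ring.
      rewrite v1. rewrite Rmult_plus_distr_r, cos_sin_prod.
      replace (f/2 + f) with ((2 * INR 1 + 1) * (f/2)) by (simpl; field).
      replace (f/2 - f) with (- (f/2)) by field. rewrite sin_neg. ring.
    - destruct IH as [IH1 IH2]. split. exact IH2.
      rewrite vSS. rewrite Rmult_minus_distr_r, Rmult_assoc, IH2, IH1, cos_sin_prod.
      rewrite !S_INR.
      replace ((2 * (INR m + 1) + 1) * (f / 2) + f) with ((2 * (INR m + 1 + 1) + 1) * (f / 2)) by field.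
      replace ((2 * (INR m + 1) + 1) * (f / 2) - f) with ((2 * INR m + 1) * (f / 2)) by field.
      ring. }
  apply H.
Qed.

Lemma v_root m k : (1 <= k <= m)%nat -> v m (2 * cos (INR k * theta m)) = 0.
Proof.
  intros Hk. unfold theta.
  set (u := PI / (2 * INR m + 1)).
  assert (Hm : 0 < 2 * INR m + 1) by (pose proof (pos_INR m); lra).
  assert (Hu : 0 < u) by (unfold u; apply Rdiv_lt_0_compat; [apply PI_RGT_0| lra]).
  assert (HPI : PI = (2 * INR m + 1) * u) by (unfold u; field; lra).
  replace (INR k * (2 * PI / (2 * INR m + 1))) with (2 * INR k * u) by (unfold u; field; lra).
  pose proof (v_trig m (2 * INR k * u)) as T.
  replace ((2 * INR m + 1) * (2 * INR k * u / 2)) with (INR k * PI) in T by (rewrite HPI; field).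
  rewrite (sin_eq_0_1 (INR k * PI)) in T by (exists (Z.of_nat k); rewrite <- INR_IZR_INZ; reflexivity).
  assert (Hs : 0 < sin (2 * INR k * u / 2)).
  { apply sin_gt_0.
    assert (1 <= INR k) by (apply (le_INR 1); lia). nra.
    assert (INR k <= INR m) by (apply le_INR; lia). rewrite HPI. nra. }
  apply (Rmult_eq_reg_r (sin (2 * INR k * u / 2))). rewrite T. ring. lra.
Qed.

Lemma cos_distinct m j k : (1 <= j)%nat -> (j < k)%nat -> (k <= m)%nat ->
  2 * cos (INR k * theta m) < 2 * cos (INR j * theta m).
Proof.
  intros Hj Hjk Hkm. unfold theta.
  set (u := PI / (2 * INR m + 1)).
  assert (Hm : 0 < 2 * INR m + 1) by (pose proof (pos_INR m); lra).
  assert (Hu : 0 < u) by (unfold u; apply Rdiv_lt_0_compat; [apply PI_RGT_0| lra]).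
  assert (HPI : PI = (2 * INR m + 1) * u) by (unfold u; field; lra).
  replace (INR k * (2 * PI / (2 * INR m + 1))) with (2 * INR k * u) by (unfold u; field; lra).
  replace (INR j * (2 * PI / (2 * INR m + 1))) with (2 * INR j * u) by (unfold u; field; lra).
  assert (1 <= INR j) by (apply (le_INR 1); lia).
  assert (INR j < INR k) by (apply lt_INR; lia).
  assert (INR k <= INR m) by (apply le_INR; lia).
  apply Rmult_lt_compat_l. lra.
  apply cos_decreasing_1; try nra.
Qed.

Lemma Hprod_sq m x j : Hprod 2 m x (S j) = Hprod 2 m x j * Rplus x (Rmult (2 * cos (INR (S j) * theta m) + 2) (2 * cos (INR (S j) * theta m) + 2)).
Proof. change (Hprod 2 m x (S j)) with (Hprod 2 m x j * (x + (2 * cos (INR (S j) * theta m) + 2) ^ 2)). f_equal. ring. Qed.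
Definition yk m k := 2 * cos (INR k * theta m).

Lemma HS_of x : (forall m, H 2 m x = hh x m) -> forall m, Hseries x m = hh x m.
Proof. intros Hh m. destruct m as [|m]. unfold hh, pp, qq. simpl. ring. apply Hh. Qed.
From mathcomp Require Import all_boot all_algebra.
From mathcomp Require Import Rstruct ring.
Set Implicit Arguments. Unset Strict Implicit. Unset Printing Implicit Defensive.
Import GRing.Theory Num.Theory.
Local Open Scope ring_scope.

Definition Mx (x p q : R) : 'M[R]_2 := \matrix_(i < 2, j < 2)
  (if (i : nat) == 0%N then (if (j : nat) == 0%N then p else - x * q)
   else (if (j : nat) == 0%N then q else p)).

Arguments Mx (x p q)%_ring_scope.
Lemma detMx x p q : \det (Mx x p q) = p ^+ 2 + x * q ^+ 2.
Proof.
rewrite (expand_det_row _ 0) !big_ord_recl big_ord0 /cofactor !det_mx11 !mxE /=.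
rewrite expr0 expr1. ring.
Qed.

Lemma MxM x p q p' q' : Mx x p q * Mx x p' q' = Mx x (p * p' - x * q * q') (p * q' + q * p').
Proof.
apply/matrixP => i j; rewrite !mxE !big_ord_recl big_ord0 !mxE /=.
case: i => [[|[|i]] Hi] //; case: j => [[|[|j]] Hj] //= ; ring.
Qed.

Lemma MxB x p q p' q' : Mx x p q - Mx x p' q' = Mx x (p - p') (q - q').
Proof.
apply/matrixP => i j; rewrite !mxE /=.
case: i => [[|[|i]] Hi] //; case: j => [[|[|j]] Hj] //= ; ring.
Qed.

Lemma MxD x p q p' q' : Mx x p q + Mx x p' q' = Mx x (p + p') (q + q').
Proof.
apply/matrixP => i j; rewrite !mxE /=.
case: i => [[|[|i]] Hi] //; case: j => [[|[|j]] Hj] //= ; ring.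
Qed.

Lemma MxC x a : a%:M = Mx x a 0.
Proof.
apply/matrixP => i j; rewrite !mxE /=.
case: i => [[|[|i]] Hi] //; case: j => [[|[|j]] Hj] //= ; ring.
Qed.

Lemma R2E : IZR 2 = 2%:R. Proof. reflexivity. Qed.
Lemma Rm1E : IZR (-1) = -1. Proof. reflexivity. Qed.
Lemma Rm2E : IZR (-2) = -2. Proof. reflexivity. Qed.

Fixpoint Vpair (m : nat) : {poly R} * {poly R} :=
  match m with 0%N => (1, 'X + 1) | S m' => let (a, b) := Vpair m' in (b, 'X * b - a) end.
Definition Vp m := (Vpair m).1.
Lemma VpSS m : Vp m.+2 = 'X * Vp m.+1 - Vp m.
Proof. rewrite /Vp /=. by case: (Vpair m). Qed.
Lemma VpS1 m : Vp m.+1 = (Vpair m).2.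
Proof. rewrite /Vp /=. by case: (Vpair m). Qed.

Lemma Vp_horner m y : (Vp m).[y] = v m y.
Proof.
suff: (Vp m).[y] = v m y /\ (Vp m.+1).[y] = v m.+1 y by case.
elim: m => [|m [IH1 IH2]]; first by rewrite /Vp /= !hornerE.
split => //. rewrite VpSS vSS !hornerE IH1 IH2. reflexivity.
Qed.

Lemma Vp_monic m : lead_coef (Vp m) = 1 /\ size (Vp m) = m.+1.
Proof.
suff: (lead_coef (Vp m) = 1 /\ size (Vp m) = m.+1) /\
      (lead_coef (Vp m.+1) = 1 /\ size (Vp m.+1) = m.+2) by case.
elim: m => [|m [[l1 s1] [l2 s2]]].
  rewrite /Vp /= lead_coef1 size_poly1 -polyC1 lead_coefXaddC size_XaddC. by [].
split => //. rewrite VpSS (mulrC 'X).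
have nz : Vp m.+1 != 0 by rewrite -size_poly_eq0 s2.
have sX : size (Vp m.+1 * 'X) = m.+3 by rewrite size_mulX // s2.
have sl : (size (- Vp m) < size (Vp m.+1 * 'X)%R)%N by rewrite size_polyN s1 sX.
by rewrite lead_coefDl // size_polyDl // lead_coefMX l2 sX.
Qed.

Definition rs m := [seq yk m k | k <- index_iota 1 m.+1].

Lemma Vp_prod m : Vp m = \prod_(z <- rs m) ('X - z%:P).
Proof.
have [l s] := Vp_monic m.
rewrite [LHS](@all_roots_prod_XsubC _ _ (rs m)) ?l ?scale1r //.
- by rewrite s size_map size_iota subSS subn0.
- apply/allP => z /mapP [k]; rewrite mem_index_iota => /andP [h1 h2] ->.
  rewrite /root Vp_horner v_root //. split; apply/leP => //.
- rewrite uniq_rootsE map_inj_in_uniq ?iota_uniq //.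
  move=> j k; rewrite !mem_index_iota => /andP [j1 j2] /andP [k1 k2] E.
  case: (ltngtP j k) => // H; exfalso.
  + have := cos_distinct m j k. rewrite /yk in E. rewrite E.
    move=> /(_ ltac:(by apply/leP) ltac:(by apply/ltP) ltac:(by apply/leP)).
    apply: Rlt_irrefl.
  + have := cos_distinct m k j. rewrite /yk in E. rewrite E.
    move=> /(_ ltac:(by apply/leP) ltac:(by apply/ltP) ltac:(by apply/leP)).
    apply: Rlt_irrefl.
Qed.



Section HM.
Variable (A : 'M[R]_2).
Lemma hmD p q : horner_mx A (p + q) = horner_mx A p + horner_mx A q.
Proof. exact: rmorphD. Qed.
Lemma hmB p q : horner_mx A (p - q) = horner_mx A p - horner_mx A q.
Proof. exact: rmorphB. Qed.
Lemma hmM p q : horner_mx A (p * q) = horner_mx A p * horner_mx A q.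
Proof. exact: rmorphM. Qed.
Lemma hm1 : horner_mx A 1 = 1.
Proof. exact: rmorph1. Qed.
Lemma hmP (s : seq R) (F : R -> {poly R}) :
  horner_mx A (\prod_(z <- s) F z) = \prod_(z <- s) horner_mx A (F z).
Proof. exact: rmorph_prod. Qed.
End HM.

Lemma hmxV x m : horner_mx (Mx x (-2) 1) (Vp m) = Mx x (pp x m) (qq x m).
Proof.
suff: horner_mx (Mx x (-2) 1) (Vp m) = Mx x (pp x m) (qq x m) /\
      horner_mx (Mx x (-2) 1) (Vp m.+1) = Mx x (pp x m.+1) (qq x m.+1) by case.
elim: m => [|m [IH1 IH2]].
  have V0 : Vp 0 = 1 by [].
  have V1 : Vp 1 = 'X + 1 by [].
  have E1 : (1 : 'M[R]_2) = Mx x 1 0 by rewrite -MxC.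
  rewrite V0 V1 hmD hm1 horner_mx_X E1 MxD.
  split; apply/matrixP => i j; rewrite !mxE /=;
  case: i => [[|[|i]] Hi] //; case: j => [[|[|j]] Hj] //= ; rewrite /pp /qq /=; rewrite ?R2E ?R1E ?Rm1E; ring.
split => //. rewrite VpSS hmB hmM horner_mx_X IH1 IH2 MxM MxB ppSS qqSS.
congr Mx; rewrite ?RminusE ?RmultE ?RoppE ?R2E; rewrite ?Rm2E; ring.
Qed.

Lemma det_prod (s : seq R) (F : R -> 'M[R]_2) :
  \det (\prod_(z <- s) F z) = \prod_(z <- s) \det (F z).
Proof.
elim: s => [|z s IH]; first by rewrite !big_nil det1.
by rewrite !big_cons -IH -det_mulmx.
Qed.

Lemma H_hh x m : H 2 m x = hh x m.
Proof.
have e1 : forall j, Hprod 2 m x j = \prod_(k <- index_iota 1 j.+1) Rplus x (Rmult (yk m k + 2) (yk m k + 2)).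
  elim => [|j IH]; first by rewrite big_nil.
  by rewrite Hprod_sq big_nat_recr //= IH.
rewrite /H e1 -(big_map (yk m) xpredT (fun z => Rplus x (Rmult (z + 2) (z + 2)))) -/(rs m).
have e2 : forall z, Rplus x (Rmult (z + 2) (z + 2)) = \det (Mx x (-2) 1 - z%:M).
  move=> z. rewrite (MxC x z) MxB detMx RplusE RmultE ?RplusE R2E. ring.
rewrite (eq_bigr _ (fun z _ => e2 z)) -det_prod.
have e3 : \prod_(z <- rs m) (Mx x (-2) 1 - z%:M) = horner_mx (Mx x (-2) 1) (Vp m).
  rewrite Vp_prod hmP. apply: eq_bigr => z _.
  by rewrite hmB horner_mx_X horner_mx_C.
rewrite e3 hmxV detMx /hh -!RpowE. reflexivity.
Qed.

Local Close Scope ring_scope.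
Local Open Scope R_scope.

Theorem proposition4p1 (x : R) (n : nat) :
  ps_mul (Hseries x)
    (ps_sub (ps_pow (ps_sub ps_one ps_t) 4)
            (ps_mul (ps_const x) (ps_mul ps_t (ps_pow (ps_add ps_t ps_one) 2)))) n
  = ps_pow (ps_sub ps_one ps_t) 3 n.
Proof.
  apply rec_main. apply HS_of. intro m. apply H_hh.
Qed.
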